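(* Let $S:M\to\mathbb{R}$ be a smooth function on Minkowski spacetime, let $\mathcal{F}_0$ be a nonzero constant $2$-form with $\mathcal{F}_0^{2}=0$ (Clifford product), let $\mu$ be a real constant, and define the $2$-form field $$\boldsymbol{F}=\mathcal{F}_0\, e^{\boldsymbol{\gamma}^5 S}=\mathcal{F}_0(\cos S+\boldsymbol{\gamma}^5\sin S).$$ (i) If the $1$-form field $\boldsymbol{P}:=-\boldsymbol{\partial} S=-dS$ satisfies $\boldsymbol{P}=\mu\,\boldsymbol{F}\boldsymbol{\gamma}^0\boldsymbol{F}$, then $\boldsymbol{F}$ satisfies the free Maxwell equation $\boldsymbol{\partial}\boldsymbol{F}=0$. (ii) Conversely, if $\boldsymbol{\partial}\boldsymbol{F}=0$, then $S$ satisfies the Hamilton–Jacobi equation of a free massless particle, $\boldsymbol{\partial}S\cdot\boldsymbol{\partial}S=0$. Consequently, for fields of this form, the free photon Hamilton–Jacobi equation $\boldsymbol{\partial}S\cdot\boldsymbol{\partial}S=0$ and the free Maxwell equation $\boldsymbol{\partial}\boldsymbol{F}=0$ are equivalent.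
   Context: Minkowski spacetime is $M\simeq\mathbb{R}^4$ with global coordinates $\{x^\mu\}$ ($\mu=0,1,2,3$) in which the metric is $\boldsymbol{g}=\eta_{\mu\nu}dx^\mu\otimes dx^\nu$, $\eta=\mathrm{diag}(1,-1,-1,-1)$. Write $\boldsymbol{\gamma}^\mu=dx^\mu$. Differential forms are regarded as sections of the Clifford bundle of differential forms $\mathcal{C}\ell(M,\mathtt{g})$, whose Clifford product satisfies $\boldsymbol{\gamma}^\mu\boldsymbol{\gamma}^\nu+\boldsymbol{\gamma}^\nu\boldsymbol{\gamma}^\mu=2\eta^{\mu\nu}$; for $1$-forms $a,b$, $a\cdot b=\tfrac12(ab+ba)$ is the (Minkowski) scalar product, so $a^2=a\cdot a$. The volume element is $\boldsymbol{\gamma}^5=\boldsymbol{\gamma}^0\boldsymbol{\gamma}^1\boldsymbol{\gamma}^2\boldsymbol{\gamma}^3$, which satisfies $(\boldsymbol{\gamma}^5)^2=-1$, anticommutes with $1$-forms and commutes with $2$-forms; $e^{\boldsymbol{\gamma}^5 S}:=\cos S+\boldsymbol{\gamma}^5\sin S$. The Dirac operator is $\boldsymbol{\partial}=\boldsymbol{\gamma}^\mu\partial_\mu=d-\delta$ ($\delta$ the Hodge codifferential), acting via the Clifford product; on a function $S$, $\boldsymbol{\partial}S=dS=\partial_\mu S\,\boldsymbol{\gamma}^\mu$. *)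

(* Defs.v *)
From HB Require Import structures.
From mathcomp Require Import all_boot all_order all_algebra.
From mathcomp Require Import all_classical all_reals all_analysis.
Set Implicit Arguments. Unset Strict Implicit. Unset Printing Implicit Defensive.
Import Order.TTheory GRing.Theory Num.Theory.
Import numFieldNormedType.Exports.
Local Open Scope ring_scope.

Definition mpoint (R : realType) := 'rV[R]_4.

Definition coord_vec (R : realType) (mu : 'I_4) : mpoint R :=
  \row_(j < 4) (j == mu)%:R.

Definition pd (R : realType) (mu : 'I_4) (f : mpoint R -> R) (x : mpoint R) : R :=
  'D_(coord_vec R mu) f x.

Fixpoint iter_pd (R : realType) (l : seq 'I_4) (f : mpoint R -> R) : mpoint R -> R :=
  match l with
  | [::] => f
  | mu :: l' => pd mu (iter_pd l' f)
  end.

Definition smooth4 (R : realType) (f : mpoint R -> R) : Prop :=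
  forall (l : seq 'I_4) (x : mpoint R), differentiable (iter_pd l f) x.

(* A (multi)form is given by its components on the basis blades
   gamma^A = gamma^{a_1} ... gamma^{a_k} (a_1 < ... < a_k, A = {a_1..a_k}),
   i.e. the basis dx^{a_1} /\ ... /\ dx^{a_k} of the exterior algebra. *)
Definition mv (R : realType) := {ffun {set 'I_4} -> R}.

Definition eta_diag (R : realType) (c : 'I_4) : R := if c == ord0 then 1 else -1.

Definition symdiff (A B : {set 'I_4}) : {set 'I_4} := (A :\: B) :|: (B :\: A).

(* gamma^A gamma^B = blade_sign A B * gamma^(A symdiff B) *)
Definition blade_sign (R : realType) (A B : {set 'I_4}) : R :=
  (-1) ^+ #|finset.finset (fun p : 'I_4 * 'I_4 => (p.1 \in A) && (p.2 \in B) && (p.2 < p.1)%N)|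
  * \prod_(c in A :&: B) eta_diag R c.

Definition cmul (R : realType) (u v : mv R) : mv R :=
  [ffun C => \sum_(A : {set 'I_4}) \sum_(B : {set 'I_4} | symdiff A B == C)
               blade_sign R A B * u A * v B].

Definition mvs (R : realType) (s : R) : mv R :=
  [ffun A => if A == finset.set0 then s else 0].

Definition gamma (R : realType) (mu : 'I_4) : mv R :=
  [ffun A => (A == finset.set1 mu)%:R].

Definition gamma5 (R : realType) : mv R :=
  cmul (cmul (cmul (gamma R 0) (gamma R 1)) (gamma R 2)) (gamma R 3).

Definition is_2form (R : realType) (u : mv R) : Prop :=
  forall A : {set 'I_4}, #|A| != 2%N -> u A = 0.

Definition mvdot (R : realType) (a b : mv R) : mv R :=
  2^-1 *: (cmul a b + cmul b a).

Definition exp_g5 (R : realType) (s : R) : mv R :=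
  mvs (cos s) + sin s *: gamma5 R.

Definition pd_mv (R : realType) (mu : 'I_4) (F : mpoint R -> mv R) (x : mpoint R) : mv R :=
  [ffun A => pd mu (fun y => F y A) x].

Definition Dirac (R : realType) (F : mpoint R -> mv R) (x : mpoint R) : mv R :=
  \sum_(mu < 4) cmul (gamma R mu) (pd_mv mu F x).

Definition gradS (R : realType) (S : mpoint R -> R) (x : mpoint R) : mv R :=
  \sum_(mu < 4) pd mu S x *: gamma R mu.

(* Main.v *)
Require Import Defs.
From HB Require Import structures.
From mathcomp Require Import all_boot all_order all_algebra.
From mathcomp Require Import all_classical all_reals all_analysis.
Import Order.TTheory GRing.Theory Num.Theory.
Import numFieldNormedType.Exports.
Local Open Scope ring_scope.
From mathcomp Require Import ring lra.
Set Implicit Arguments. Unset Strict Implicit.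
Lemma dcs (R : realType) (S : mpoint R -> R) (a b : R) (x v : mpoint R) :
  differentiable S x ->
  'D_v (fun y => cos (S y) * a + sin (S y) * b) x = 'D_v S x * (- sin (S x) * a + cos (S x) * b).
Proof.
move=> dS.
pose g := (fun r : R => a * cos r + b * sin r).
have gd : forall r, is_derive r (1:R) g (a *: - sin r + b *: cos r).
  move=> r; rewrite /g. apply: is_deriveD.
have dg : differentiable g (S x).
  apply/derivable1_diffP. case: (gd (S x)). done.
rewrite (_ : (fun y => _) = g \o S); last first.
  by apply/funext => y; rewrite /g /= !(mulrC a) !(mulrC b).
rewrite deriveE; last exact: differentiable_comp.
rewrite diff_comp // /= diff1E // derive1E -deriveE //.
have [_ ->] := gd (S x).
have sc : forall c d : R, c *: d = c * d by [].
by rewrite !sc (mulrC a) (mulrC b).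
Qed.
Definition bsgn (A B : {set 'I_4}) : nat :=
  (\sum_(p : 'I_4 * 'I_4) ((p.1 \in A) && (p.2 \in B) && (p.2 < p.1)%N) +
  \sum_(c : 'I_4) ((c \in A) && (c \in B) && (c != ord0)))%N.

Lemma blade_signE (R : realType) (A B : {set 'I_4}) : blade_sign R A B = (-1) ^+ bsgn A B.
Proof.
rewrite /blade_sign /bsgn exprD; congr (_ * _).
  congr (_ ^+ _); rewrite -sum1_card big_mkcond /=; apply: eq_bigr => p _.
  by rewrite inE; case: (_ && _).
rewrite -prodrXr big_mkcond /=; apply: eq_bigr => c _.
rewrite inE /eta_diag; case: (c \in A); case: (c \in B); case: (c == ord0) => //=;
  by rewrite ?expr0 ?expr1.
Qed.

Lemma odd_sum (I : Type) (r : seq I) (P : pred I) (F : I -> nat) :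
  odd (\sum_(i <- r | P i) F i) = \big[addb/false]_(i <- r | P i) odd (F i).
Proof. by elim/big_rec2: _ => // i x y _ <-; rewrite oddD. Qed.

Lemma xor4 (p1 c1 p2 c2 p3 c3 p4 c4 : bool) : p1 (+) p2 = p3 (+) p4 -> c1 (+) c2 = c3 (+) c4 ->
  (p1 (+) c1) (+) (p2 (+) c2) = (p3 (+) c3) (+) (p4 (+) c4).
Proof.
by case: p1; case: p2; case: p3; case: p4; case: c1; case: c2; case: c3; case: c4.
Qed.

Lemma xor_big4 (I : finType) (f g h k : I -> bool) : (forall i, f i (+) g i = h i (+) k i) ->
  \big[addb/false]_i f i (+) \big[addb/false]_i g i = \big[addb/false]_i h i (+) \big[addb/false]_i k i.
Proof.
move=> H; rewrite -!big_split /=; apply: eq_bigr => i _; exact: H.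
Qed.

Lemma bsgn_assoc (A B C : {set 'I_4}) :
  odd (bsgn A B + bsgn (symdiff A B) C) = odd (bsgn A (symdiff B C) + bsgn B C).
Proof.
rewrite /bsgn !oddD !odd_sum.
apply: xor4; apply: xor_big4 => p; rewrite /symdiff !inE.
  by case: (p.1 \in A); case: (p.1 \in B); case: (p.2 \in B); case: (p.2 \in C);
     case: (p.2 < p.1)%N.
by case: (p \in A); case: (p \in B); case: (p \in C); case: (p != ord0).
Qed.

Lemma symdiffA (A B C : {set 'I_4}) : symdiff A (symdiff B C) = symdiff (symdiff A B) C.
Proof.
apply/finset.setP => x; rewrite /symdiff !inE.
by case: (x \in A); case: (x \in B); case: (x \in C).
Qed.

Lemma symdiffC (A B : {set 'I_4}) : symdiff A B = symdiff B A.
Proof. by apply/finset.setP => x; rewrite /symdiff !inE orbC. Qed.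

Lemma symdiff0 (A : {set 'I_4}) : symdiff A finset.set0 = A.
Proof. by apply/finset.setP => x; rewrite /symdiff !inE; case: (x \in A). Qed.

Lemma symdiffxx (A : {set 'I_4}) : symdiff A A = finset.set0.
Proof. by apply/finset.setP => x; rewrite /symdiff !inE; case: (x \in A). Qed.

Lemma bsgn0 (A : {set 'I_4}) : bsgn A finset.set0 = 0%N.
Proof. by rewrite /bsgn !big1 // => i _; rewrite inE ?andbF. Qed.

Lemma bsgn0l (A : {set 'I_4}) : bsgn finset.set0 A = 0%N.
Proof. by rewrite /bsgn !big1 // => i _; rewrite inE. Qed.

Lemma bsgn_lt (A B : {set 'I_4}) : (forall a b : 'I_4, a \in A -> b \in B -> (a < b)%N) -> bsgn A B = 0%N.
Proof.
move=> H.
have h1 : (\sum_(c : 'I_4) ((c \in A) && (c \in B) && (c != ord0)) = 0)%N.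
  rewrite big1 // => c _; case c1: (c \in A); case c2: (c \in B) => //=.
  by have := H _ _ c1 c2; rewrite ltnn.
have h2 : (\sum_(p : 'I_4 * 'I_4) ((p.1 \in A) && (p.2 \in B) && (p.2 < p.1)%N) = 0)%N.
  rewrite big1 // => p _.
  case p1: (p.1 \in A); case p2: (p.2 \in B) => //=.
  by have := H _ _ p1 p2; move/ltnW; rewrite leqNgt => /negbTE ->.
by rewrite /bsgn h1 h2.
Qed.

Lemma bsgn11 (a b : 'I_4) : bsgn (finset.set1 a) (finset.set1 b) = ((b < a)%N + ((a == b) && (a != ord0)))%N.
Proof.
rewrite /bsgn (bigD1 (a, b)) //= big1 ?addn0; last first.
  move=> [i j] /=; rewrite !finset.in_set1 xpair_eqE.
  by case: (i == a); case: (j == b).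
rewrite !finset.in_set1 !eqxx /=; congr (_ + _)%N.
rewrite (bigD1 a) //= big1 ?addn0; last first.
  by move=> c /negbTE; rewrite finset.in_set1 => ->.
by rewrite !finset.in_set1 eqxx.
Qed.

Lemma sum_pair4 (F : 'I_4 * 'I_4 -> nat) :
  (\sum_(p : 'I_4 * 'I_4) F p = \sum_(i < 4) \sum_(j < 4) F (i, j))%N.
Proof. by rewrite pair_bigA; apply: eq_bigr => -[]. Qed.

Lemma bsgnTT : odd (bsgn [set: 'I_4] [set: 'I_4]).
Proof.
by rewrite /bsgn sum_pair4 !big_ord_recl !big_ord0 !finset.in_setT.
Qed.

Lemma comm5 (A : {set 'I_4}) : #|A| = 2%N -> odd (bsgn [set: 'I_4] A) = odd (bsgn A [set: 'I_4]).
Proof.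
rewrite /bsgn !sum_pair4 -sum1_card big_mkcond /=.
rewrite !big_ord_recl !big_ord0 !finset.in_setT /=.
move: (ord0 \in A) (lift ord0 ord0 \in A) (lift ord0 (lift ord0 ord0) \in A) (lift ord0 (lift ord0 (lift ord0 ord0)) \in A).
by do 4! case.
Qed.

Definition blade (R : realType) (A : {set 'I_4}) : mv R := [ffun X => (X == A)%:R].

Lemma bladeE (R : realType) (A X : {set 'I_4}) : blade R A X = (X == A)%:R.
Proof. by rewrite ffunE. Qed.

Lemma scR (R : realType) (c d : R) : c *: d = c * d.
Proof. by []. Qed.

Lemma cmulDl (R : realType) (u v w : mv R) : cmul (u + v) w = cmul u w + cmul v w.
Proof.
apply/ffunP => C; rewrite !ffunE -big_split; apply: eq_bigr => A _.
rewrite -big_split; apply: eq_bigr => B _; rewrite !ffunE.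
by rewrite mulrDr mulrDl.
Qed.

Lemma cmulDr (R : realType) (u v w : mv R) : cmul u (v + w) = cmul u v + cmul u w.
Proof.
apply/ffunP => C; rewrite !ffunE -big_split; apply: eq_bigr => A _.
rewrite -big_split; apply: eq_bigr => B _; rewrite !ffunE.
by rewrite mulrDr.
Qed.

Lemma cmulZl (R : realType) (a : R) (u v : mv R) : cmul (a *: u) v = a *: cmul u v.
Proof.
apply/ffunP => C; rewrite !ffunE scR mulr_sumr; apply: eq_bigr => A _.
rewrite mulr_sumr; apply: eq_bigr => B _; rewrite !ffunE scR.
by ring.
Qed.

Lemma cmulZr (R : realType) (a : R) (u v : mv R) : cmul u (a *: v) = a *: cmul u v.
Proof.
apply/ffunP => C; rewrite !ffunE scR mulr_sumr; apply: eq_bigr => A _.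
rewrite mulr_sumr; apply: eq_bigr => B _; rewrite !ffunE scR.
by ring.
Qed.

Lemma cmul0l (R : realType) (v : mv R) : cmul 0 v = 0.
Proof.
apply/ffunP => C; rewrite !ffunE big1 // => A _; rewrite big1 // => B _.
by rewrite ffunE mulr0 mul0r.
Qed.

Lemma cmul0r (R : realType) (v : mv R) : cmul v 0 = 0.
Proof.
apply/ffunP => C; rewrite !ffunE big1 // => A _; rewrite big1 // => B _.
by rewrite ffunE mulr0.
Qed.

Lemma cmul_suml (R : realType) (I : Type) (r : seq I) (P : pred I) (F : I -> mv R) (v : mv R) :
  cmul (\sum_(i <- r | P i) F i) v = \sum_(i <- r | P i) cmul (F i) v.
Proof.
elim/big_rec2: _ => [|i x y _ <-]; first exact: cmul0l.
by rewrite cmulDl.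
Qed.

Lemma cmul_sumr (R : realType) (I : Type) (r : seq I) (P : pred I) (F : I -> mv R) (v : mv R) :
  cmul v (\sum_(i <- r | P i) F i) = \sum_(i <- r | P i) cmul v (F i).
Proof.
elim/big_rec2: _ => [|i x y _ <-]; first exact: cmul0r.
by rewrite cmulDr.
Qed.

Lemma blade_decomp (R : realType) (u : mv R) : u = \sum_A u A *: blade R A.
Proof.
apply/ffunP => C; rewrite sum_ffunE (bigD1 C) //= big1 ?addr0.
  by rewrite ffunE bladeE eqxx scR mulr1.
by move=> A /negbTE hAC; rewrite ffunE bladeE eq_sym hAC scR mulr0.
Qed.

Lemma cmul_blade (R : realType) (A B : {set 'I_4}) :
  cmul (blade R A) (blade R B) = blade_sign R A B *: blade R (symdiff A B).
Proof.
apply/ffunP => C; rewrite !ffunE (bigD1 A) //=.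
rewrite [X in _ + X]big1 ?addr0; last first.
  move=> X /negbTE XA; apply: big1 => Y _; by rewrite !bladeE XA mulr0 mul0r.
rewrite big_mkcond (bigD1 B) //=.
rewrite [X in _ + X]big1 ?addr0; last first.
  move=> Y /negbTE YB; case: ifP => // _; by rewrite !bladeE YB mulr0.
rewrite !bladeE !eqxx !mulr1 scR.
case: (boolP (symdiff A B == C)) => [/eqP->|h]; first by rewrite eqxx mulr1.
by rewrite eq_sym (negbTE h) mulr0.
Qed.

Lemma bl_assoc (R : realType) (A B C : {set 'I_4}) :
  cmul (cmul (blade R A) (blade R B)) (blade R C) = cmul (blade R A) (cmul (blade R B) (blade R C)).
Proof.
rewrite !cmul_blade cmulZl cmulZr !cmul_blade !scalerA symdiffA.
congr (_ *: _); rewrite !blade_signE -!exprD -[LHS]signr_odd -[RHS]signr_odd.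
by rewrite bsgn_assoc addnC.
Qed.

Lemma cmulA2 (R : realType) (A B : {set 'I_4}) (w : mv R) :
  cmul (cmul (blade R A) (blade R B)) w = cmul (blade R A) (cmul (blade R B) w).
Proof.
rewrite (blade_decomp w) [in LHS]cmul_sumr [in RHS]cmul_sumr [in RHS]cmul_sumr.
by apply: eq_bigr => C _; rewrite !cmulZr bl_assoc.
Qed.

Lemma cmulA1 (R : realType) (A : {set 'I_4}) (v w : mv R) :
  cmul (cmul (blade R A) v) w = cmul (blade R A) (cmul v w).
Proof.
rewrite (blade_decomp v) [in LHS]cmul_sumr [in LHS]cmul_suml [in RHS]cmul_suml [in RHS]cmul_sumr.
by apply: eq_bigr => C _; rewrite cmulZr cmulZl cmulZl cmulZr cmulA2.
Qed.

Lemma cmulA (R : realType) (u v w : mv R) : cmul (cmul u v) w = cmul u (cmul v w).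
Proof.
rewrite (blade_decomp u) [in LHS]cmul_suml [in LHS]cmul_suml [in RHS]cmul_suml.
by apply: eq_bigr => C _; rewrite !cmulZl cmulA1.
Qed.

Lemma mvs_blade (R : realType) (c : R) : mvs c = c *: blade R finset.set0.
Proof.
apply/ffunP => X; rewrite !ffunE ?bladeE scR.
by case: (X == finset.set0); rewrite ?mulr1 ?mulr0.
Qed.

Lemma cmul_b0r (R : realType) (u : mv R) : cmul u (blade R finset.set0) = u.
Proof.
rewrite [in LHS](blade_decomp u) cmul_suml [in RHS](blade_decomp u).
apply: eq_bigr => A _.
by rewrite cmulZl cmul_blade symdiff0 blade_signE bsgn0 expr0 scale1r.
Qed.

Lemma cmul_b0l (R : realType) (u : mv R) : cmul (blade R finset.set0) u = u.
Proof.
rewrite [in LHS](blade_decomp u) cmul_sumr [in RHS](blade_decomp u).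
apply: eq_bigr => A _.
by rewrite cmulZr cmul_blade symdiffC symdiff0 blade_signE bsgn0l expr0 scale1r.
Qed.

Lemma cmul_mvsr (R : realType) (u : mv R) (c : R) : cmul u (mvs c) = c *: u.
Proof. by rewrite mvs_blade cmulZr cmul_b0r. Qed.

Lemma cmul_mvsl (R : realType) (u : mv R) (c : R) : cmul (mvs c) u = c *: u.
Proof. by rewrite mvs_blade cmulZl cmul_b0l. Qed.

Lemma gamma_blade (R : realType) (mu : 'I_4) : gamma R mu = blade R (finset.set1 mu).
Proof. by apply/ffunP => X; rewrite !ffunE. Qed.

Lemma gamma5_blade (R : realType) : gamma5 R = blade R [set: 'I_4].
Proof.
rewrite /gamma5 !gamma_blade !(cmul_blade, cmulZl) !scalerA.
rewrite !blade_signE !bsgn_lt; first last.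
- move=> a b; rewrite /symdiff !inE.
  by move: a b => [[|[|[|[|?]]]] ?] [[|[|[|[|?]]]] ?].
- move=> a b; rewrite /symdiff !inE.
  by move: a b => [[|[|[|[|?]]]] ?] [[|[|[|[|?]]]] ?].
- move=> a b; rewrite /symdiff !inE.
  by move: a b => [[|[|[|[|?]]]] ?] [[|[|[|[|?]]]] ?].
rewrite !expr0 !mulr1 scale1r; congr (blade R _).
apply/finset.setP => x; rewrite /symdiff !inE.
by move: x => [[|[|[|[|?]]]] ?].
Qed.

Lemma g5_sq (R : realType) : cmul (gamma5 R) (gamma5 R) = mvs (-1).
Proof.
rewrite gamma5_blade cmul_blade symdiffxx blade_signE -signr_odd bsgnTT expr1.
by rewrite mvs_blade.
Qed.

Lemma g5_blade_comm (R : realType) (A : {set 'I_4}) : #|A| = 2%N ->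
  cmul (gamma5 R) (blade R A) = cmul (blade R A) (gamma5 R).
Proof.
move=> cA; rewrite gamma5_blade !cmul_blade symdiffC !blade_signE.
by rewrite -[in LHS]signr_odd -[in RHS]signr_odd comm5.
Qed.

Lemma g5_comm (R : realType) (F0 : mv R) : is_2form F0 ->
  cmul (gamma5 R) F0 = cmul F0 (gamma5 R).
Proof.
move=> H; rewrite (blade_decomp F0) cmul_sumr cmul_suml; apply: eq_bigr => A _.
rewrite cmulZr cmulZl; case: (boolP (#|A| == 2%N)) => [/eqP h|h].
  by rewrite g5_blade_comm.
by rewrite H // !scale0r.
Qed.

Lemma clifford (R : realType) (a b : 'I_4) :
  cmul (gamma R a) (gamma R b) + cmul (gamma R b) (gamma R a) =
  ((a == b)%:R * 2 * eta_diag R a) *: blade R finset.set0.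
Proof.
rewrite !gamma_blade !cmul_blade (symdiffC (finset.set1 b)) -scalerDl !blade_signE !bsgn11.
case: (eqVneq a b) => [<-|ne].
  rewrite symdiffxx ltnn ?eqxx /eta_diag; case: (a == ord0) => /=;
  by rewrite ?expr0 ?expr1; congr (_ *: _); ring.
rewrite /= !addn0 !mul0r.
have -> : (-1) ^+ (b < a)%N + (-1) ^+ (a < b)%N = 0 :> R.
  case: ltngtP => h; rewrite ?expr0 ?expr1 ?subrr ?addNr //.
  by move: ne; rewrite (val_inj h) eqxx.
by rewrite !scale0r.
Qed.

Lemma mvdot_grad (R : realType) (a : 'I_4 -> R) :
  mvdot (\sum_(mu < 4) a mu *: gamma R mu) (\sum_(mu < 4) a mu *: gamma R mu) =
  (\sum_(mu < 4) eta_diag R mu * a mu ^+ 2) *: blade R finset.set0.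
Proof.
set g := \sum_(mu < 4) _.
have E : cmul g g = \sum_(mu < 4) \sum_(nu < 4) (a mu * a nu) *: cmul (gamma R mu) (gamma R nu).
  rewrite /g cmul_suml; apply: eq_bigr => mu _.
  rewrite cmul_sumr; apply: eq_bigr => nu _.
  by rewrite cmulZl cmulZr scalerA.
have E' : cmul g g = \sum_(mu < 4) \sum_(nu < 4) (a mu * a nu) *: cmul (gamma R nu) (gamma R mu).
  rewrite E exchange_big; apply: eq_bigr => mu _; apply: eq_bigr => nu _.
  by rewrite mulrC.
rewrite /mvdot {1}E E' -big_split /=.
rewrite (eq_bigr (fun mu => (2 * eta_diag R mu * a mu ^+ 2) *: blade R finset.set0)); last first.
  move=> mu _; rewrite -big_split /= (bigD1 mu) //= big1 ?addr0.
    by rewrite -scalerDr clifford eqxx mulr1n mul1r scalerA; congr (_ *: _); ring.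
  move=> nu ne; rewrite -scalerDr clifford (eq_sym mu nu) (negbTE ne).
  by rewrite !mul0r !scale0r scaler0.
rewrite -scaler_suml scalerA; congr (_ *: _); rewrite mulr_sumr; apply: eq_bigr => mu _.
by rewrite !mulrA mulVf ?mul1r.
Qed.

Lemma e_comm (R : realType) (F0 : mv R) (s : R) : is_2form F0 ->
  cmul (exp_g5 s) F0 = cmul F0 (exp_g5 s).
Proof.
move=> h; rewrite /exp_g5 cmulDl cmulDr cmulZl cmulZr cmul_mvsl cmul_mvsr g5_comm //.
Qed.

Lemma solve_XY (R : realType) (c s : R) (X Y : mv R) : c ^+ 2 + s ^+ 2 = 1 ->
  - s *: X + c *: Y = 0 -> - s *: Y + c *: ((-1) *: X) = 0 -> X = 0.
Proof.
move=> c2 eq1 eq2.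
apply/ffunP => A; rewrite [RHS]ffunE.
have h1 := congr1 (fun u : mv R => u A) eq1.
have h2 := congr1 (fun u : mv R => u A) eq2.
move: h1 h2; rewrite /= !ffunE !scR => h1 h2.
have key : X A = c * (c * X A + s * Y A) + s * (s * X A - c * Y A).
  rewrite -[X A in LHS]mul1r -c2; ring.
rewrite key.
have -> : c * X A + s * Y A = 0.
  by lra.
have -> : s * X A - c * Y A = 0.
  by lra.
by rewrite !mulr0 addr0.
Qed.

Unset Implicit Arguments.

Theorem mainTheorem1 (R : realType) (S : mpoint R -> R) (F0 : mv R) (mu : R) :
  smooth4 S ->
  is_2form F0 -> F0 != 0 -> cmul F0 F0 = 0 ->
  let F := fun x : mpoint R => cmul F0 (exp_g5 (S x)) in
  ((forall x, - gradS S x = mu *: cmul (cmul (F x) (gamma R 0)) (F x)) ->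
     forall x, Dirac F x = 0)
  /\
  ((forall x, Dirac F x = 0) -> forall x, mvdot (gradS S x) (gradS S x) = 0).
Proof.
move=> smS h2F F0n0 F0sq F.
set G := cmul F0 (gamma5 R).
have dS : forall x, differentiable S x := fun x => smS [::] x.
have Fx : forall y, F y = cos (S y) *: F0 + sin (S y) *: G.
  by move=> y; rewrite /F /exp_g5 cmulDr cmulZr cmul_mvsr.
have Dir : forall x, Dirac F x = cmul (gradS S x) (- sin (S x) *: F0 + cos (S x) *: G).
  move=> x; rewrite /Dirac /gradS cmul_suml; apply: eq_bigr => nu _.
  rewrite cmulZl -cmulZr; congr cmul; apply/ffunP => A; rewrite /pd_mv !ffunE.
  rewrite (_ : (fun y => F y A) = fun y => cos (S y) * F0 A + sin (S y) * G A); last first.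
    by apply/funext => y; rewrite Fx !ffunE !scR.
  by rewrite /pd dcs // !scR /G ?ffunE.
have XY : forall x, cmul (cmul (gradS S x) F0) (gamma5 R) = cmul (gradS S x) G.
  by move=> x; rewrite cmulA.
split.
  move=> hP x.
  have X0 : cmul (gradS S x) F0 = 0.
    have -> : gradS S x = (- mu) *: cmul (cmul (F x) (gamma R 0)) (F x).
      by rewrite scaleNr -hP opprK.
    rewrite cmulZl cmulA.
    have -> : cmul (F x) F0 = 0.
      by rewrite /F cmulA e_comm // -cmulA F0sq cmul0l.
    by rewrite cmul0r scaler0.
  by rewrite Dir cmulDr !cmulZr X0 -XY X0 cmul0l !scaler0 addr0.
move=> hD x.
set X := cmul (gradS S x) F0.
set Y := cmul (gradS S x) G.
have eq1 : - sin (S x) *: X + cos (S x) *: Y = 0.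
  by rewrite -(hD x) Dir cmulDr !cmulZr.
have eq2 : - sin (S x) *: Y + cos (S x) *: ((-1) *: X) = 0.
  have := congr1 (fun u => cmul u (gamma5 R)) eq1; rewrite /= cmul0l cmulDl !cmulZl.
  rewrite XY -/Y; rewrite (_ : cmul Y (gamma5 R) = (-1) *: X) //.
  by rewrite /Y -XY cmulA g5_sq cmul_mvsr.
have X0 : X = 0 := solve_XY (cos2Dsin2 (S x)) eq1 eq2.
have hq : cmul (mvdot (gradS S x) (gradS S x)) F0 = 0.
  by rewrite /mvdot cmulZl cmulDl cmulA -/X X0 cmul0r addr0 scaler0.
rewrite /gradS mvdot_grad in hq *.
move: hq; rewrite cmulZl cmul_b0l => /eqP; rewrite scaler_eq0 (negbTE F0n0) orbF.
by move/eqP ->; rewrite scale0r.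
Qed.
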